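(* Let $n\ge1$ and let $x\in\mathcal{A}_n(\{0121,0112\})$. Let $x^+$ denote the subsequence of positive entries of $x$. Then exactly one of the following holds: (label $(0)$) $x=0^n$; (label $(01)$) $x^+=12\cdots m$ for some $m\ge1$; (label $(011)$) $x^+=12\cdots(m-1)m^s$ for some $m\ge1$ and $s\ge2$. Moreover, writing $m=\max(x)$, the letters $t$ for which the sequence $xt$ (obtained by appending $t$) lies in $\mathcal{A}_{n+1}(\{0121,0112\})$, together with the labels of the resulting $xt$, are exactly: - if $x$ has label $(0)$: $t=0$ (label $(0)$) and $t=1$ (label $(01)$); - if $x$ has label $(01)$: $t=0$ (label $(01)$), $t=m$ (label $(011)$), and $t=m+1$ (label $(01)$); - if $x$ has label $(011)$: $t=0$ and $t=m$, both giving label $(011)$.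
   Context: An ascent in an integer sequence $s_1\cdots s_m$ is an index $j$ with $s_j<s_{j+1}$; $\mathrm{asc}$ denotes the number of ascents. An ascent sequence is a sequence $x_1\cdots x_n$ of nonnegative integers with $x_1=0$ and $x_i\le 1+\mathrm{asc}(x_1\cdots x_{i-1})$ for all $i\ge2$. The reduction $\mathrm{red}(w)$ of an integer sequence $w$ replaces the $i$-th smallest distinct letter of $w$ by $i-1$; a pattern is a reduced sequence. A sequence $x$ contains a pattern $p=p_1\cdots p_k$ if there are indices $i_1<\cdots<i_k$ with $\mathrm{red}(x_{i_1}\cdots x_{i_k})=p$; otherwise $x$ avoids $p$. For a finite set $P$ of patterns, $\mathcal{A}_n(P)$ denotes the set of ascent sequences of length $n$ avoiding every pattern in $P$. Here $c^s$ denotes $s$ consecutive copies of the letter $c$. *)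

(* Defs.v *)
From mathcomp Require Import all_boot.
Set Implicit Arguments. Unset Strict Implicit. Unset Printing Implicit Defensive.

Definition asc (s : seq nat) : nat :=
  count (fun p : nat * nat => p.1 < p.2) (zip s (behead s)).

(* ascent sequence: x_1 = 0 and x_i <= 1 + asc(x_1..x_{i-1}) for i >= 2
   (0-indexed: for 1 <= i < size x, nth 0 x i <= 1 + asc (take i x)). *)
Definition ascent_seq (x : seq nat) : Prop :=
  head 1 x = 0 /\
  forall i, 1 <= i < size x -> nth 0 x i <= (asc (take i x)).+1.

Definition red (w : seq nat) : seq nat :=
  map (fun a => index a (sort leq (undup w))) w.

Definition contains (x p : seq nat) : Prop :=
  exists s, subseq s x /\ red s = p.

Definition avoids (x : seq nat) (P : seq (seq nat)) : Prop :=
  forall p, p \in P -> ~ contains x p.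

Definition inA (n : nat) (P : seq (seq nat)) (x : seq nat) : Prop :=
  size x = n /\ ascent_seq x /\ avoids x P.

Definition P3 : seq (seq nat) := [:: [:: 0; 1; 2; 1]; [:: 0; 1; 1; 2]].

Definition xplus (x : seq nat) : seq nat := filter (fun a => 0 < a) x.

Definition maxseq (x : seq nat) : nat := foldr maxn 0 x.

Inductive Label := L0 | L01 | L011.

Definition has_label (x : seq nat) (l : Label) : Prop :=
  match l with
  | L0 => x = nseq (size x) 0
  | L01 => exists m, 1 <= m /\ xplus x = iota 1 m
  | L011 => exists m s, 1 <= m /\ 2 <= s /\ xplus x = iota 1 m.-1 ++ nseq s m
  end.

Definition trans (l : Label) (m t : nat) (l' : Label) : Prop :=
  match l with
  | L0 => (t = 0 /\ l' = L0) \/ (t = 1 /\ l' = L01)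
  | L01 => (t = 0 /\ l' = L01) \/ (t = m /\ l' = L011) \/ (t = m.+1 /\ l' = L01)
  | L011 => (t = 0 /\ l' = L011) \/ (t = m /\ l' = L011)
  end.

(* Main.v *)
Require Import Defs.
From mathcomp Require Import all_boot.
From mathcomp Require Import zify.

Lemma red_sorted s : sorted ltn (sort leq (undup s)).
Proof.
by rewrite ltn_sorted_uniq_leq sort_uniq undup_uniq (sort_sorted leq_total).
Qed.

Lemma red_mem s y : (y \in sort leq (undup s)) = (y \in s).
Proof. by rewrite mem_sort mem_undup. Qed.

Lemma red_eq3 s a b c : a < b < c -> s =i [:: a; b; c] ->
  sort leq (undup s) = [:: a; b; c].
Proof.
move=> /andP[hab hbc] hs.
apply: (irr_sorted_eq ltn_trans ltnn (red_sorted s)).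
  by rewrite /= hab hbc.
by move=> y; rewrite red_mem hs.
Qed.

Lemma red_0121 a b c : a < b < c -> red [:: a; b; c; b] = [:: 0; 1; 2; 1].
Proof.
move=> h; rewrite /red (@red_eq3 [:: a; b; c; b] _ _ _ h); last first.
  by move=> y; rewrite !inE; case: (y == a); case: (y == b); case: (y == c).
move: h => /andP[hab hbc].
have hac := ltn_trans hab hbc.
by rewrite /= !eqxx ?(gtn_eqF hab) ?(gtn_eqF hbc) ?(gtn_eqF hac) ?(ltn_eqF hab) ?(ltn_eqF hbc) ?(ltn_eqF hac).
Qed.

Lemma red_0112 a b c : a < b < c -> red [:: a; b; b; c] = [:: 0; 1; 1; 2].
Proof.
move=> h; rewrite /red (@red_eq3 [:: a; b; b; c] _ _ _ h); last first.
  by move=> y; rewrite !inE; case: (y == a); case: (y == b); case: (y == c).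
move: h => /andP[hab hbc].
have hac := ltn_trans hab hbc.
by rewrite /= !eqxx ?(gtn_eqF hab) ?(gtn_eqF hbc) ?(gtn_eqF hac) ?(ltn_eqF hab) ?(ltn_eqF hbc) ?(ltn_eqF hac).
Qed.

Lemma idx_lt (u : seq nat) (x y : nat) : sorted ltn u -> x \in u -> y \in u ->
  index x u < index y u -> x < y.
Proof.
move=> su hx hy hi.
rewrite -(nth_index 0 hx) -(nth_index 0 hy).
apply: (sorted_ltn_nth ltn_trans) => //; by rewrite inE index_mem.
Qed.

Lemma idx_eq (u : seq nat) (x y : nat) : x \in u -> y \in u -> index x u = index y u -> x = y.
Proof.
by move=> hx hy hi; rewrite -(nth_index 0 hx) -(nth_index 0 hy) hi.
Qed.

Lemma red_inv s p : red s = p -> size s = size p /\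
  forall i j, i < size s -> j < size s ->
    (nth 0 p i < nth 0 p j -> nth 0 s i < nth 0 s j) /\
    (nth 0 p i = nth 0 p j -> nth 0 s i = nth 0 s j).
Proof.
move=> <-; rewrite /red size_map; split=> // i j hi hj.
rewrite !(nth_map 0) //.
have mi : nth 0 s i \in sort leq (undup s) by rewrite red_mem mem_nth.
have mj : nth 0 s j \in sort leq (undup s) by rewrite red_mem mem_nth.
split; [exact: idx_lt (red_sorted s) mi mj | exact: idx_eq].
Qed.

Lemma red_0121_inv s : red s = [:: 0; 1; 2; 1] ->
  exists a b c, s = [:: a; b; c; b] /\ a < b < c.
Proof.
move/red_inv=> [hs h].
case: s hs h => [|a [|b [|c [|d [|]]]]] //= _ h.
have [h01 _] := h 0 1 erefl erefl.
have [h12 _] := h 1 2 erefl erefl.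
have [_ h13] := h 1 3 erefl erefl.
rewrite /= in h01 h12 h13.
rewrite -h13 //; exists a, b, c; split=> //; rewrite h01 // h12 //.
Qed.

Lemma red_0112_inv s : red s = [:: 0; 1; 1; 2] ->
  exists a b c, s = [:: a; b; b; c] /\ a < b < c.
Proof.
move/red_inv=> [hs h].
case: s hs h => [|a [|b [|c [|d [|]]]]] //= _ h.
have [h01 _] := h 0 1 erefl erefl.
have [h23 _] := h 2 3 erefl erefl.
have [_ h12] := h 1 2 erefl erefl.
rewrite /= in h01 h23 h12.
have e := h12 erefl; have l1 := h01 erefl; have l2 := h23 erefl.
subst c; exists a, b, d; split=> //; by rewrite l1 l2.
Qed.

Lemma asc_cons2 a b s : asc [:: a, b & s] = (a < b) + asc (b :: s).
Proof. by []. Qed.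

Lemma xplus_cons a s : xplus (a :: s) = if 0 < a then a :: xplus s else xplus s.
Proof. by []. Qed.

Lemma asc_xplus s : forall a, sorted ltn (xplus (a :: s)) -> asc (a :: s) = size (xplus s).
Proof.
elim: s => [//|b s IH] a hs.
have hs' : sorted ltn (xplus (b :: s)).
  move: hs; rewrite xplus_cons; case: (0 < a) => //; exact: path_sorted.
rewrite asc_cons2 (IH b hs') [xplus (b :: s)]xplus_cons.
case: b hs hs' => [|b] hs hs' //=.
case: a hs => [|a] //= /andP[h _]; by rewrite h.
Qed.

Lemma asc_prefix s u : asc s <= asc (s ++ u).
Proof.
case: s => [//|a s]; elim: s a => [//|b s IH] a.
rewrite cat_cons cat_cons !asc_cons2 -cat_cons leq_add2l; exact: IH.
Qed.

Lemma mem_max s y : y \in s -> y <= maxseq s.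
Proof.
elim: s => [//|a s IH]; rewrite inE /= => /orP[/eqP->|h].
  exact: leq_maxl.
exact: leq_trans (IH h) (leq_maxr _ _).
Qed.

Lemma maxseq_le s M : (forall y, y \in s -> y <= M) -> maxseq s <= M.
Proof.
elim: s => [//|a s IH] h /=; rewrite geq_max h ?mem_head //=.
apply: IH => y hy; apply: h; by rewrite inE hy orbT.
Qed.

Lemma maxseq_eq s M : M \in s -> (forall y, y \in s -> y <= M) -> maxseq s = M.
Proof. by move=> hM h; apply/eqP; rewrite eqn_leq maxseq_le // mem_max. Qed.

Lemma maxseq_xplus x : maxseq x = maxseq (xplus x).
Proof.
elim: x => [//|a s IH]; rewrite xplus_cons.
have -> : maxseq (a :: s) = maxn a (maxseq s) by [].
case: a => [|a]; first by rewrite max0n IH.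
by rewrite IH.
Qed.

Lemma xplus_nseq0 k : xplus (nseq k 0) = [::].
Proof. by elim: k. Qed.

Lemma rcons_nseq (k a : nat) : rcons (nseq k a) a = nseq k.+1 a.
Proof. by elim: k => //= k ->. Qed.

Lemma xplus_rcons x t : xplus (rcons x t) = if 0 < t then rcons (xplus x) t else xplus x.
Proof. by rewrite /xplus filter_rcons. Qed.

Lemma iota_rcons1 m : rcons (iota 1 m) m.+1 = iota 1 m.+1.
Proof. by have := iotaD 1 m 1; rewrite addn1 add1n cats1 => ->. Qed.

Lemma iota_split m : 1 <= m -> iota 1 m = rcons (iota 1 m.-1) m.
Proof. by case: m => // m _; rewrite iota_rcons1. Qed.

Lemma label_max x l : has_label x l ->
  maxseq x = match l with L0 => 0 | _ => maxseq (xplus x) end.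
Proof.
case: l => /=; last 2 first.
- by rewrite maxseq_xplus.
- by rewrite maxseq_xplus.
by move=> ->; rewrite maxseq_xplus xplus_nseq0.
Qed.

Lemma max_iota m : 1 <= m -> maxseq (iota 1 m) = m.
Proof.
move=> hm; apply: maxseq_eq.
  by rewrite mem_iota hm add1n ltnSn.
by move=> y; rewrite mem_iota add1n ltnS => /andP[].
Qed.

Lemma max_iota_nseq m s : 1 <= m -> 1 <= s -> maxseq (iota 1 m.-1 ++ nseq s m) = m.
Proof.
move=> hm hs; apply: maxseq_eq.
  by rewrite mem_cat mem_nseq eqxx hs orbT.
move=> y; rewrite mem_cat mem_iota mem_nseq => /orP[|/andP[_ /eqP->//]].
move=> /andP[_]; rewrite add1n; case: m hm => // m _ /= /ltnW //.
Qed.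

Lemma label_nobad x l b c : has_label x l -> 0 < b < c ->
  1 < count_mem b (xplus x) -> c \in xplus x -> False.
Proof.
case: l => /=.
- by move=> ->; rewrite xplus_nseq0.
- move=> [m [_ ->]] _; rewrite count_uniq_mem ?iota_uniq //; by case: (b \in _).
- move=> [m [s [hm [hs ->]]]] /andP[hb hbc].
  rewrite count_cat count_nseq mem_cat mem_nseq mem_iota count_uniq_mem ?iota_uniq //.
  move=> hcnt hc.
  have cm : c <= m.
    case/orP: hc => [/andP[_]|/andP[_ /eqP->//]].
    rewrite add1n; case: m hm {hcnt} => // m _ /= /ltnW //.
  have : (m == b) = false by apply/negbTE; rewrite neq_ltn (leq_trans hbc cm) orbT.
  move=> e; move: hcnt; rewrite /= e mul0n addn0; by case: (b \in _).
Qed.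

Lemma label_avoid x l : has_label x l -> avoids x P3.
Proof.
move=> hl p; rewrite !inE => /orP[/eqP->|/eqP->] [s [hs hr]].
- have [a [b [c [es /andP[hab hbc]]]]] := red_0121_inv _ hr; subst s.
  have hb : 0 < b by apply: leq_ltn_trans hab.
  have hc : 0 < c by apply: ltn_trans hbc.
  have sub : subseq [:: b; c; b] (xplus x).
    rewrite /xplus subseq_filter /= hb hc /=.
    exact: subseq_trans (subseq_cons _ a) hs.
  apply: (@label_nobad x l b c hl); first by rewrite hb hbc.
    apply: leq_trans (leq_count_subseq _ sub).
    by rewrite /= eqxx (gtn_eqF hbc).
  by apply: (mem_subseq sub); rewrite !inE eqxx orbT.
- have [a [b [c [es /andP[hab hbc]]]]] := red_0112_inv _ hr; subst s.
  have hb : 0 < b by apply: leq_ltn_trans hab.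
  have hc : 0 < c by apply: ltn_trans hbc.
  have sub : subseq [:: b; b; c] (xplus x).
    rewrite /xplus subseq_filter /= hb hc /=.
    exact: subseq_trans (subseq_cons _ a) hs.
  apply: (@label_nobad x l b c hl); first by rewrite hb hbc.
    apply: leq_trans (leq_count_subseq _ sub).
    by rewrite /= eqxx (gtn_eqF hbc).
  by apply: (mem_subseq sub); rewrite !inE eqxx !orbT.
Qed.

Lemma ascent_rcons x t : x != [::] ->
  ascent_seq (rcons x t) <-> ascent_seq x /\ t <= (asc x).+1.
Proof.
move=> hx; rewrite /ascent_seq -cats1 size_cat /= addn1.
have hh : head 1 (x ++ [:: t]) = head 1 x.
  by case: x hx.
have hsz : 0 < size x.
  by case: x hx hh.
rewrite hh; split.
- move=> [h0 h]; split; first split=> //.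
  + move=> i /andP[h1 hi].
    have := h i; rewrite h1 /= ltnW ?ltnS //= => /(_ erefl).
    by rewrite nth_cat hi takel_cat // ltnW.
  + have := h (size x); rewrite hsz ltnSn /= => /(_ erefl).
    by rewrite nth_cat ltnn subnn takel_cat // take_size.
- move=> [[h0 h] ht]; split=> // i /andP[h1 hi].
  rewrite nth_cat takel_cat; last by rewrite -ltnS.
  case: ltnP => hlt.
    apply: h; by rewrite h1.
  have e : i = size x by apply/eqP; rewrite eqn_leq hlt -ltnS hi.
  by rewrite e subnn take_size.
Qed.

Lemma avoids_rcons x t P : avoids (rcons x t) P -> avoids x P.
Proof.
move=> h p hp [s [hs hr]]; apply: (h p hp); exists s; split=> //.
exact: subseq_trans hs (subseq_rcons x t).
Qed.

Lemma trans_label x l t l' : has_label x l -> trans l (maxseq x) t l' ->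
  has_label (rcons x t) l'.
Proof.
case: l => /=.
- move=> hx [[-> ->]|[-> ->]] /=.
  + by rewrite hx size_rcons size_nseq rcons_nseq.
  + by exists 1; rewrite xplus_rcons hx xplus_nseq0.
- move=> [m [hm hx]]; rewrite maxseq_xplus hx max_iota //.
  move=> [[-> ->]|[[-> ->]|[-> ->]]] /=.
  + by exists m; rewrite xplus_rcons.
  + exists m, 2; rewrite xplus_rcons hm hx; do 2 split=> //.
    by rewrite (@iota_split m hm) -!cats1 -catA.
  + by exists m.+1; rewrite xplus_rcons hx iota_rcons1.
- move=> [m [s [hm [hs hx]]]]; rewrite maxseq_xplus hx max_iota_nseq //; last by apply: ltnW.
  move=> [[-> ->]|[-> ->]] /=.
  + by exists m, s; rewrite xplus_rcons.
  + exists m, s.+1; rewrite xplus_rcons hm hx; do 2 split=> //; first by apply: ltnW.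
    by rewrite rcons_cat rcons_nseq.
Qed.

Lemma pat_sub x' u t : subseq u (xplus x') -> subseq (0 :: rcons u t) (rcons (0 :: x') t).
Proof.
move=> h; rewrite rcons_cons /= ?eqxx -!cats1; apply: cat_subseq => //.
exact: subseq_trans h (filter_subseq _ _).
Qed.

Lemma sub2_cat (a b : nat) s1 s2 : a \in s1 -> b \in s2 -> subseq [:: a; b] (s1 ++ s2).
Proof.
by move=> ha hb; apply: (@cat_subseq _ [:: a] [:: b]); rewrite sub1seq.
Qed.

Lemma trans_forward x' l t : has_label (0 :: x') l ->
  ascent_seq (rcons (0 :: x') t) -> avoids (rcons (0 :: x') t) P3 ->
  exists l', trans l (maxseq (0 :: x')) t l'.
Proof.
move=> hl /ascent_rcons [//| hasc ht] hav.
have bad121 : forall k m, 0 < k < m -> subseq [:: k; m] (xplus x') -> t = k -> False.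
  move=> k m /andP[hk hkm] hsub et; apply: (hav [:: 0; 1; 2; 1]); first by rewrite inE eqxx.
  exists [:: 0; k; m; k]; split; last by rewrite red_0121 // hk hkm.
  by rewrite et; apply: (pat_sub _ [:: k; m]).
case: l hl => hl.
- have hxp : xplus x' = [::].
    have h2 : xplus (0 :: x') = [::] by rewrite [0 :: x']hl xplus_nseq0.
    exact h2.
  have hx0 : xplus (0 :: x') = xplus x' by [].
  have e : asc (0 :: x') = 0.
    by rewrite asc_xplus ?hxp //; rewrite hx0 hxp.
  rewrite e in ht; case: t ht {bad121 hav} => [|[|]] // _.
    by exists L0; left.
  by exists L01; right.
- case: hl => m [hm hx].
  have hx' : xplus x' = iota 1 m by rewrite -hx.
  have e : asc (0 :: x') = m.
    rewrite asc_xplus ?hx' ?size_iota //.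
    by rewrite hx iota_ltn_sorted.
  rewrite maxseq_xplus hx max_iota //; rewrite e in ht.
  case: (ltngtP t m) => htm.
  + case: t htm ht bad121 hav => [|t] htm ht bad121 hav.
      by exists L01; left.
    exfalso; apply: (bad121 t.+1 m); [exact: htm | | by []].
    rewrite hx'.
    have -> : iota 1 m = iota 1 t.+1 ++ iota (1 + t.+1) (m - t.+1).
      by rewrite -iotaD; congr iota; lia.
    apply: sub2_cat; rewrite mem_iota; apply/andP; split; lia.
  + have -> : t = m.+1 by apply/eqP; rewrite eqn_leq ht htm.
    by exists L01; right; right.
  + by exists L011; right; left.
- case: hl => m [s [hm [hs hx]]].
  have hx' : xplus x' = iota 1 m.-1 ++ nseq s m by rewrite -hx.
  rewrite maxseq_xplus hx max_iota_nseq //; last by apply: ltnW.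
  case: (ltngtP t m) => htm.
  + case: t htm ht bad121 hav => [|t] htm ht bad121 hav.
      by exists L011; left.
    exfalso; apply: (bad121 t.+1 m); [exact: htm | | by []].
    rewrite hx'; apply: sub2_cat; rewrite ?mem_nseq ?eqxx ?mem_iota ?andbT; try (apply/andP; split); lia.
  + exfalso; apply: (hav [:: 0; 1; 1; 2]); first by rewrite !inE eqxx orbT.
    exists [:: 0; m; m; t]; split; last by rewrite red_0112 // hm htm.
    apply: (pat_sub _ [:: m; m]); rewrite hx'.
    apply: (@cat_subseq _ [::] [:: m; m]); first exact: sub0seq.
    have -> : s = 2 + (s - 2) by rewrite subnKC.
    by rewrite nseqD prefix_subseq.
  + by exists L011; right; rewrite htm.
Qed.

Arguments label_avoid {x l}.
Arguments trans_label {x l t l'}.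
Arguments trans_forward {x' l t}.

Lemma asc_label01 x' m : xplus (0 :: x') = iota 1 m -> asc (0 :: x') = m.
Proof.
move=> hx; have hx' : xplus x' = iota 1 m by rewrite -hx.
rewrite asc_xplus ?hx' ?size_iota //.
by rewrite hx iota_ltn_sorted.
Qed.

Arguments asc_label01 {x' m}.

Lemma mem_le_asc x y : ascent_seq x -> y \in x -> y <= (asc x).+1.
Proof.
move=> [h0 h] hy.
have hi : index y x < size x by rewrite index_mem.
case e : (index y x) => [|i].
  have := nth_index 0 hy; rewrite e; case: x h0 {h hi e hy} => //= a s -> <- //.
have hle : nth 0 x (index y x) <= (asc (take (index y x) x)).+1.
  by apply: h; rewrite hi e andbT.
rewrite nth_index // in hle; apply: leq_trans hle _.
rewrite ltnS; have := asc_prefix (take (index y x) x) (drop (index y x) x).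
by rewrite cat_take_drop.
Qed.

Lemma trans_backward n x' l t l' : inA n P3 (0 :: x') -> has_label (0 :: x') l ->
  trans l (maxseq (0 :: x')) t l' -> inA n.+1 P3 (rcons (0 :: x') t).
Proof.
move=> [hsz [hasc hav]] hl ht.
split; first by rewrite size_rcons hsz.
split; last exact: label_avoid (trans_label hl ht).
apply/ascent_rcons => //; split => //.
case: l hl ht => hl ht.
- by case: ht => [[-> _]|[-> _]].
- case: hl => m [hm hx].
  rewrite (asc_label01 hx); move: ht; rewrite maxseq_xplus hx max_iota //.
  by case=> [[-> _]|[[-> _]|[-> _]]] //; apply: ltnW.
- case: hl => m [s [hm [hs hx]]].
  move: ht; rewrite maxseq_xplus hx max_iota_nseq //; last by apply: ltnW.
  case=> [[-> _]|[-> _]] //.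
  apply: mem_le_asc => //.
  have : m \in xplus (0 :: x') by rewrite hx mem_cat mem_nseq eqxx andbT orbC; apply/orP; left; apply: ltnW.
  by rewrite /xplus mem_filter => /andP[].
Qed.

Definition labf x := if xplus x == [::] then L0 else if uniq (xplus x) then L01 else L011.

Lemma label_f x l : has_label x l -> l = labf x.
Proof.
rewrite /labf; case: l => /=.
- by move=> hx; rewrite hx xplus_nseq0.
- move=> [m [hm ->]]; rewrite iota_uniq; by case: m hm.
- move=> [m [s [hm [hs ->]]]].
  case: s hs => [|[|s]] // _.
  have -> : (iota 1 m.-1 ++ nseq s.+2 m == [::]) = false.
    by rewrite -size_eq0 size_cat size_nseq addnS.
  have -> : uniq (iota 1 m.-1 ++ nseq s.+2 m) = false.
    apply/negbTE; apply/negP => /(subseq_uniq (suffix_subseq _ _)).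
    by rewrite /= inE eqxx.
  by [].
Qed.

Arguments label_f {x l}.

Lemma exists_label n : forall x, 1 <= n -> inA n P3 x -> exists l, has_label x l.
Proof.
elim: n => [//|n IH] x _ [hsz [hasc hav]].
case: n IH hsz => [|n] IH hsz.
  case: x hsz hasc {hav} => [|a [|]] // _ [h0 _].
  by rewrite /= in h0; rewrite h0; exists L0.
case/lastP: x hsz hasc hav => [//|y t] hsz hasc hav.
have hy : y != [::] by case: y hsz hasc hav.
have [hy1 ht] := (ascent_rcons y t hy).1 hasc.
have hA : inA n.+1 P3 y.
  split; first by move: hsz; rewrite size_rcons => -[].
  split=> //; exact: avoids_rcons hav.
have [l hl] := IH y erefl hA.
case: y hy hl hy1 hA hasc hav {hsz ht} => [//|a y'] _ hl hy1 hA hasc hav.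
have ha : a = 0 by case: hy1.
subst a.
have [l' htr] := trans_forward hl hasc hav.
by exists l'; apply: trans_label hl htr.
Qed.

Theorem lemma3p3 (n : nat) (x : seq nat) :
  1 <= n -> inA n P3 x ->
  (exists l, has_label x l /\ forall l', has_label x l' -> l' = l) /\
  (forall l, has_label x l ->
     forall t : nat,
       (inA n.+1 P3 (rcons x t) <-> exists l', trans l (maxseq x) t l') /\
       (forall l', trans l (maxseq x) t l' -> has_label (rcons x t) l')).
Proof.
move=> hn hA.
split.
  have [l hl] := exists_label n x hn hA.
  exists l; split=> // l' hl'; by rewrite (label_f hl') (label_f hl).
move=> l hl t; split; last by move=> l'; apply: trans_label.
case: x hA hl => [|a x'] hA hl.
  by case: hA => _ [[h0 _] _].
have ha : a = 0 by case: hA => _ [[h0 _] _].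
subst a.
split.
  move=> [_ [h2 h3]]; exact: trans_forward hl h2 h3.
move=> [l' ht]; exact: trans_backward hA hl ht.
Qed.
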